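(* Let $k \ge 1$ be an integer and let $n > 1$. Let $\mathcal{R}$ be any deterministic algorithm that, given access to an unknown database only through the top-$k$ range-query interface described in the context, always outputs the tuple of the database with the smallest value of $A$. Then there exist a database $D$ of $n$ tuples over the single attribute $A$ and a system ranking function (that is, a rule for choosing which $k$ matching tuples are returned by each overflowing query) such that, on $D$, the algorithm $\mathcal{R}$ issues at least $n/k$ queries before it outputs the tuple with the smallest value of $A$. Equivalently, in the worst case, finding the top-ranked tuple on one attribute through a top-$k$ interface can require as many queries as it takes to retrieve all $n$ tuples.
   Context: A database $D$ is a finite set of tuples with a single ordinal (real-valued) attribute $A$ whose value domain is the open interval $(v_0, v_\infty)$ of the reals, $v_0 < v_\infty$. Distinct tuples have distinct $A$-values. An algorithm may access $D$ only by issuing queries of the form ''SELECT * FROM $D$ WHERE $A \in (v_1, v_2)$'' with $v_0 \le v_1 < v_2 \le v_\infty$. Let $R(q)$ denote the set of tuples whose $A$-value lies in $(v_1, v_2)$. If $|R(q)| \le k$ the interface returns all of $R(q)$. If $|R(q)| > k$ (the query ''overflows'') it returns some $k$ tuples of $R(q)$, chosen by a proprietary system ranking function about which the algorithm knows nothing. This choice is arbitrary and may depend on the previously issued queries. The cost of an algorithm is the number of queries it issues. *)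

(* Defs.v *)
From Stdlib Require Import Reals Lra Lia List Sorting.Sorted.
Import ListNotations.
Open Scope R_scope.

(* A tuple is identified with its (distinct) A-value, a real number.
   A database is a finite set of such values, represented canonically as a
   strictly increasing list of reals. *)
Definition database := list R.

Definition in_domain (v0 vinf : R) (D : database) : Prop :=
  Sorted Rlt D /\ forall x, In x D -> v0 < x < vinf.

(* A query "SELECT * FROM D WHERE A in (v1, v2)" is the pair (v1, v2). *)
Definition query := (R * R)%type.

Definition valid_query (v0 vinf : R) (q : query) : Prop :=
  v0 <= fst q /\ fst q < snd q /\ snd q <= vinf.

Definition inside (q : query) (x : R) : bool :=
  if Rlt_dec (fst q) x then (if Rlt_dec x (snd q) then true else false) else false.

Definition matching (D : database) (q : query) : list R := filter (inside q) D.

Definition ranking := list query -> query -> list R.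

Definition valid_ranking (k : nat) (D : database) (rank : ranking) : Prop :=
  forall prev q, (k < length (matching D q))%nat ->
    length (rank prev q) = k /\ Sorted Rlt (rank prev q) /\
    incl (rank prev q) (matching D q).

Definition answer (k : nat) (D : database) (rank : ranking)
    (prev : list query) (q : query) : list R :=
  if (length (matching D q) <=? k)%nat then matching D q else rank prev q.

Inductive step := Ask (q : query) | Output (t : R).
Definition history := list (query * list R).
Definition algorithm := history -> step.

Fixpoint run (alg : algorithm) (k : nat) (D : database) (rank : ranking)
    (fuel : nat) (h : history) : option (R * history) :=
  match fuel with
  | O => None
  | S f =>
      match alg h with
      | Output t => Some (t, h)
      | Ask q => run alg k D rank f (h ++ [(q, answer k D rank (map fst h) q)])
      end
  end.

Definition is_min (D : database) (t : R) : Prop :=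
  In t D /\ forall x, In x D -> t <= x.

Definition always_finds_min (v0 vinf : R) (k : nat) (alg : algorithm) : Prop :=
  forall (D : database) (rank : ranking),
    in_domain v0 vinf D -> D <> [] -> valid_ranking k D rank ->
    exists fuel t h, run alg k D rank fuel [] = Some (t, h) /\
      is_min D t /\ Forall (fun qa => valid_query v0 vinf (fst qa)) h.

(* Main.v *)
Require Import Defs.
From Stdlib Require Import Reals List Lra Lia Sorting.Sorted.
Import ListNotations.
Open Scope R_scope.

Lemma hdrel_of (a : R) (l : list R) : (forall y, In y l -> a < y) -> HdRel Rlt a l.
Proof. intros H; destruct l; constructor; apply H; left; reflexivity. Qed.

Lemma sorted_app (l1 l2 : list R) : Sorted Rlt l1 -> Sorted Rlt l2 ->
  (forall x y, In x l1 -> In y l2 -> x < y) -> Sorted Rlt (l1 ++ l2).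
Proof.
  induction l1 as [|a l1 IH]; intros H1 H2 H; simpl; auto.
  apply Sorted_inv in H1 as [H1 Ha].
  constructor.
  - apply IH; auto. intros x y Hx Hy; apply H; simpl; auto.
  - destruct l1 as [|b l1']; simpl.
    + apply hdrel_of; intros y Hy; apply H; simpl; auto.
    + apply HdRel_inv in Ha. constructor; exact Ha.
Qed.

Lemma sorted_filter (f : R -> bool) (l : list R) : Sorted Rlt l -> Sorted Rlt (filter f l).
Proof.
  intros H. apply Sorted_StronglySorted in H; [|intros x y z; apply Rlt_trans].
  apply StronglySorted_Sorted.
  induction H as [|a l Hs IH Hf]; simpl; [constructor|].
  destruct (f a); auto. constructor; auto.
  rewrite Forall_forall in *. intros x Hx. apply filter_In in Hx. apply Hf; tauto.
Qed.

Lemma sorted_skipn (n : nat) : forall (l : list R), Sorted Rlt l -> Sorted Rlt (skipn n l).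
Proof.
  induction n; intros l H; simpl; auto. destruct l; auto.
  apply IHn. apply Sorted_inv in H; tauto.
Qed.

Lemma in_skipn (n : nat) (l : list R) (y : R) : In y (skipn n l) -> In y l.
Proof. intros H. rewrite <- (firstn_skipn n l). apply in_or_app; auto. Qed.

Fixpoint pts (lo hi : R) (j : nat) : list R :=
  match j with O => [] | S j' => ((lo+hi)/2) :: pts ((lo+hi)/2) hi j' end.

Lemma pts_prop (j : nat) : forall lo hi, lo < hi ->
  Sorted Rlt (pts lo hi j) /\ length (pts lo hi j) = j /\
  forall x, In x (pts lo hi j) -> lo < x < hi.
Proof.
  induction j; intros lo hi H; simpl.
  - split; [constructor|]. split; [reflexivity|]. intros z [].
  - destruct (IHj ((lo+hi)/2) hi) as [A [B C]]; [lra|].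
    split; [|split].
    + constructor; auto. apply hdrel_of. intros y Hy; apply C in Hy; lra.
    + auto.
    + intros z [Hz|Hz]; [subst; lra|]. apply C in Hz; lra.
Qed.

Definition topk (k : nat) (D : database) : ranking :=
  fun _ q => skipn (length (matching D q) - k) (matching D q).

Lemma answer_topk k D prev q :
  answer k D (topk k D) prev q = skipn (length (matching D q) - k) (matching D q).
Proof.
  unfold answer, topk. destruct (Nat.leb_spec (length (matching D q)) k); auto.
  replace (length (matching D q) - k)%nat with 0%nat by lia. reflexivity.
Qed.

Lemma valid_topk k D : Sorted Rlt D -> valid_ranking k D (topk k D).
Proof.
  intros H prev q Hk. unfold topk. repeat split.
  - rewrite length_skipn. lia.
  - apply sorted_skipn, sorted_filter, H.
  - intros x Hx. eapply in_skipn; eauto.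
Qed.

Definition ub (v0 : R) (q : query) : bool :=
  if Rle_dec (fst q) v0 then (if Rlt_dec v0 (snd q) then true else false) else false.

Lemma inside_hidden v0 l1 q x : v0 < x -> x < l1 ->
  (v0 < fst q -> l1 <= fst q) -> (v0 < snd q -> l1 <= snd q) ->
  inside q x = ub v0 q.
Proof.
  intros H1 H2 H3 H4. unfold inside, ub.
  destruct (Rlt_dec (fst q) x); destruct (Rle_dec (fst q) v0);
  destruct (Rlt_dec x (snd q)); destruct (Rlt_dec v0 (snd q)); auto;
  exfalso;
  try (destruct (Rlt_dec v0 (fst q)); [specialize (H3 r1)|]);
  try (destruct (Rlt_dec v0 (snd q)); [specialize (H4 r1)|]); lra.
Qed.

Lemma filter_hidden v0 l1 q S : (forall x, In x S -> v0 < x < l1) ->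
  (v0 < fst q -> l1 <= fst q) -> (v0 < snd q -> l1 <= snd q) ->
  filter (inside q) S = if ub v0 q then S else [].
Proof.
  intros H H3 H4. induction S as [|a S IH]; simpl. destruct (ub v0 q); auto.
  rewrite IH by (intros; apply H; simpl; auto).
  destruct (H a) as [Ha1 Ha2]; [left; auto|].
  rewrite (inside_hidden v0 l1 q a Ha1 Ha2 H3 H4).
  destruct (ub v0 q); auto.
Qed.

Inductive reach (alg : algorithm) (k : nat) (D : database) : history -> Prop :=
| reach0 : reach alg k D []
| reachS h q : reach alg k D h -> alg h = Ask q ->
    reach alg k D (h ++ [(q, answer k D (topk k D) (map fst h) q)]).

Lemma run_len alg k D rk f : forall h t h', run alg k D rk f h = Some (t, h') ->
  (length h <= length h')%nat.
Proof.
  induction f; intros h t h' H; simpl in H; [discriminate|].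
  destruct (alg h).
  - apply IHf in H. rewrite length_app in H. lia.
  - inversion H; subst; lia.
Qed.

Lemma run_from_reach alg k D h : reach alg k D h -> forall f t h',
  run alg k D (topk k D) f [] = Some (t, h') ->
  exists f', run alg k D (topk k D) f' h = Some (t, h').
Proof.
  induction 1 as [|h q Hr IH Hq]; intros f t h' Hrun; eauto.
  destruct (IH f t h' Hrun) as [f' Hf']. destruct f' as [|f']; [discriminate|].
  simpl in Hf'. rewrite Hq in Hf'. eauto.
Qed.

Lemma reach_len alg k D h : reach alg k D h -> forall f t h',
  run alg k D (topk k D) f [] = Some (t, h') -> (length h <= length h')%nat.
Proof.
  intros Hr f t h' Hrun. destruct (run_from_reach alg k D h Hr f t h' Hrun) as [f' Hf'].
  eapply run_len; eauto.
Qed.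

Lemma reach_to_start alg k D h : reach alg k D h -> forall f t h',
  run alg k D (topk k D) f h = Some (t, h') ->
  exists f', run alg k D (topk k D) f' [] = Some (t, h').
Proof.
  induction 1 as [|h q Hr IH Hq]; intros f t h' Hrun; eauto.
  apply (IH (S f)). simpl. rewrite Hq. exact Hrun.
Qed.

Lemma run_unique alg k D rk f1 : forall f2 h r1 r2,
  run alg k D rk f1 h = Some r1 -> run alg k D rk f2 h = Some r2 -> r1 = r2.
Proof.
  induction f1; intros f2 h r1 r2 H1 H2; [discriminate|].
  destruct f2; [discriminate|]. simpl in *.
  destruct (alg h); eauto. congruence.
Qed.

Definition good (v0 l : R) (m : nat) (S : list R) :=
  Sorted Rlt S /\ length S = m /\ forall x, In x S -> v0 < x < l.

Lemma good_weaken v0 l l' m S : l <= l' -> good v0 l m S -> good v0 l' m S.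
Proof. intros H [A [B C]]; split; [|split]; auto. intros x Hx; apply C in Hx; lra. Qed.

Lemma good_pts v0 l m : v0 < l -> good v0 l m (pts v0 l m).
Proof. intros H. destruct (pts_prop m v0 l H) as [A [B C]]. split; auto. Qed.

Lemma in_dom_app v0 vinf l m S T : good v0 l m S -> Sorted Rlt T ->
  (forall x, In x T -> l < x < vinf) -> l <= vinf -> v0 < l -> in_domain v0 vinf (S ++ T).
Proof.
  intros [A [B C]] HT HT2 Hl Hl0. split.
  - apply sorted_app; auto. intros x y Hx Hy. apply C in Hx; apply HT2 in Hy; lra.
  - intros x Hx. apply in_app_iff in Hx as [Hx|Hx]; [apply C in Hx|apply HT2 in Hx]; destruct Hx; split; lra.
Qed.

Lemma skip_exact (a b : list R) n : n = length a -> skipn n (a ++ b) = b.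
Proof. intros ->. rewrite skipn_app, skipn_all, Nat.sub_diag. reflexivity. Qed.

Lemma adv v0 vinf k n alg : (1 <= k)%nat -> v0 < vinf -> always_finds_min v0 vinf k alg ->
 forall N T h l m,
  Sorted Rlt T -> (forall x, In x T -> l < x < vinf) -> v0 < l -> l <= vinf ->
  (length T + m = n)%nat -> (length T <= k * length h)%nat ->
  (forall S, good v0 l m S -> reach alg k (S ++ T) h) ->
  exists S, good v0 l m S /\ forall fuel t h',
    run alg k (S ++ T) (topk k (S ++ T)) fuel [] = Some (t, h') ->
    (n <= k * length h' \/ length h + N <= length h')%nat.
Proof.
  intros Hk Hv Halg. induction N as [|N IH]; intros T h l m HT HT2 Hl Hlv Hn Hh Hr.
  - exists (pts v0 l m). split; [apply good_pts; lra|].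
    intros fuel t h' Hrun. right. rewrite Nat.add_0_r.
    eapply reach_len; [apply Hr, good_pts; lra| exact Hrun].
  - destruct m as [|m].
    + exists []. assert (Hg: good v0 l 0 []).
      { split; [constructor|split; [reflexivity|intros x []]]. }
      split; auto. intros fuel t h' Hrun. left.
      pose proof (reach_len _ _ _ _ (Hr [] Hg) _ _ _ Hrun) as H. nia.
    + destruct (alg h) as [q|t0] eqn:Ha.
      2:{ exfalso. set (mid := (v0+l)/2).
        assert (G1: good v0 l (S m) (pts mid l (S m))).
        { destruct (pts_prop (S m) mid l) as [A [B C]]; [unfold mid; lra|].
          split; auto. split; auto. intros x Hx; apply C in Hx; unfold mid in *; destruct Hx; split; lra. }
        assert (G2: good v0 l (S m) (pts v0 mid (S m))).
        { destruct (pts_prop (S m) v0 mid) as [A [B C]]; [unfold mid; lra|].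
          split; auto. split; auto. intros x Hx; apply C in Hx; unfold mid in *; destruct Hx; split; lra. }
        assert (Hmin: forall Z, good v0 l (S m) Z -> is_min (Z ++ T) t0).
        { intros Z G. pose proof (Hr Z G) as HR.
          destruct (reach_to_start _ _ _ _ HR 1 t0 h) as [f Hf].
          { simpl. rewrite Ha. reflexivity. }
          assert (HD: in_domain v0 vinf (Z ++ T)) by (eapply in_dom_app; eauto).
          destruct (Halg (Z++T) (topk k (Z++T))) as [fu [t' [h'' [Hrun [Hm _]]]]].
          - exact HD.
          - destruct G as [_ [GL _]]. destruct Z; simpl in GL; [discriminate|]. simpl; discriminate.
          - apply valid_topk. apply HD.
          - pose proof (run_unique _ _ _ _ _ _ _ _ _ Hrun Hf) as E. inversion E; subst; auto. }
        destruct (Hmin _ G1) as [Hin1 _]. destruct (Hmin _ G2) as [_ Hle2].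
        specialize (Hle2 ((v0+mid)/2)). simpl pts in Hle2.
        assert (t0 <= (v0 + mid)/2) by (apply Hle2; left; reflexivity).
        apply in_app_iff in Hin1 as [Hin1|Hin1].
        - destruct (pts_prop (S m) mid l) as [_ [_ C]]; [unfold mid; lra|].
          apply C in Hin1. unfold mid in *; destruct Hin1; lra.
        - apply HT2 in Hin1. unfold mid in *; destruct Hin1; lra. }
      set (l1 := Rmin l (Rmin (if Rlt_dec v0 (fst q) then fst q else l)
                              (if Rlt_dec v0 (snd q) then snd q else l))).
      assert (L1a: v0 < l1).
      { unfold l1. apply Rmin_glb_lt; [lra|].
        destruct (Rlt_dec v0 (fst q)); destruct (Rlt_dec v0 (snd q)); apply Rmin_glb_lt; lra. }
      assert (L1b: l1 <= l) by apply Rmin_l.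
      assert (L1c: v0 < fst q -> l1 <= fst q).
      { intros H; unfold l1; destruct (Rlt_dec v0 (fst q)); [|contradiction].
        eapply Rle_trans; [apply Rmin_r|apply Rmin_l]. }
      assert (L1d: v0 < snd q -> l1 <= snd q).
      { intros H; unfold l1; destruct (Rlt_dec v0 (snd q)); [|contradiction].
        eapply Rle_trans; [apply Rmin_r|apply Rmin_r]. }
      assert (Hmatch: forall Z, good v0 l1 (S m) Z ->
        matching (Z ++ T) q = (if ub v0 q then Z else []) ++ matching T q).
      { intros Z [_ [_ C]]. unfold matching at 1. rewrite filter_app.
        rewrite (filter_hidden v0 l1 q Z C L1c L1d). reflexivity. }
      assert (Hstep: forall Z, good v0 l1 (S m) Z -> reach alg k (Z ++ T)
          (h ++ [(q, skipn (length (matching (Z++T) q) - k) (matching (Z++T) q))])).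
      { intros Z G. rewrite <- answer_topk with (prev := map fst h). apply reachS; auto.
        apply Hr. eapply good_weaken; eauto. }
      set (MT := matching T q) in *.
      set (A0 := skipn (length MT - k) MT).
      assert (Hcont: (forall Z, good v0 l1 (S m) Z ->
          skipn (length (matching (Z++T) q) - k) (matching (Z++T) q) = A0) ->
        exists Z, good v0 l (S m) Z /\ forall fuel t h',
          run alg k (Z ++ T) (topk k (Z ++ T)) fuel [] = Some (t, h') ->
          (n <= k * length h' \/ length h + Datatypes.S N <= length h')%nat).
      { intros HA. destruct (IH T (h ++ [(q, A0)]) l1 (S m)) as [Z [G HS]]; auto.
        - intros x Hx; apply HT2 in Hx; destruct Hx; split; lra.
        - lra.
        - rewrite length_app; simpl; nia.
        - intros Z G. rewrite <- (HA Z G). apply Hstep, G.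
        - exists Z. split; [eapply good_weaken; eauto|].
          intros fuel t h' Hrun. destruct (HS fuel t h' Hrun) as [H|H]; [left; auto|right].
          rewrite length_app in H; simpl in H; lia. }
      destruct (ub v0 q) eqn:Hu.
      * destruct (Compare_dec.le_lt_dec (S m + length MT) k) as [Hle|Hlt].
        -- set (S0 := pts v0 l1 (S m)).
           assert (G: good v0 l1 (S m) S0) by (apply good_pts; lra).
           exists S0. split; [eapply good_weaken; eauto|].
           intros fuel t h' Hrun. left.
           pose proof (reach_len _ _ _ _ (Hstep S0 G) _ _ _ Hrun) as H.
           rewrite length_app in H; simpl in H. nia.
        -- destruct (Compare_dec.le_lt_dec k (length MT)) as [Hk2|Hk2].
           ++ apply Hcont. intros Z G. rewrite (Hmatch Z G). rewrite length_app.
              destruct G as [_ [GL _]]. rewrite GL.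
              rewrite skipn_app, skipn_all2 by lia. rewrite app_nil_l. unfold A0. f_equal. lia.
           ++ set (j := (k - length MT)%nat).
              set (mid := (v0 + l1)/2).
              set (P := pts mid l1 j).
              destruct (pts_prop j mid l1) as [PA [PB PC]]; [unfold mid; lra|].
              fold P in PA, PB, PC.
              destruct (IH (P ++ T) (h ++ [(q, P ++ MT)]) mid (S m - j)%nat) as [S' [G' HS']].
              ** apply sorted_app; auto. intros x y Hx Hy. apply PC in Hx; apply HT2 in Hy.
                 destruct Hx, Hy; lra.
              ** intros x Hx. apply in_app_iff in Hx as [Hx|Hx];
                   [apply PC in Hx|apply HT2 in Hx]; unfold mid in *; destruct Hx; split; lra.
              ** unfold mid; lra.
              ** unfold mid; lra.
              ** rewrite length_app, PB. unfold j. lia.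
              ** rewrite !length_app, PB. simpl. unfold j. nia.
              ** intros S1 G1.
                 assert (GS: good v0 l1 (S m) (S1 ++ P)).
                 { destruct G1 as [A [B C]]. split; [|split].
                   - apply sorted_app; auto. intros x y Hx Hy. apply C in Hx; apply PC in Hy.
                     destruct Hx, Hy; lra.
                   - rewrite length_app, B, PB. unfold j. lia.
                   - intros x Hx. apply in_app_iff in Hx as [Hx|Hx];
                       [apply C in Hx|apply PC in Hx]; unfold mid in *; destruct Hx; split; lra. }
                 pose proof (Hstep _ GS) as H. rewrite (Hmatch _ GS) in H.
                 rewrite <- !app_assoc in H.
                 rewrite skip_exact in H.
                 --- exact H.
                 --- destruct G1 as [_ [B _]]. rewrite !length_app, B, PB. unfold j. lia.
              ** exists (S' ++ P).
                 assert (GS: good v0 l1 (S m) (S' ++ P)).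
                 { destruct G' as [A [B C]]. split; [|split].
                   - apply sorted_app; auto. intros x y Hx Hy. apply C in Hx; apply PC in Hy.
                     destruct Hx, Hy; lra.
                   - rewrite length_app, B, PB. unfold j. lia.
                   - intros x Hx. apply in_app_iff in Hx as [Hx|Hx];
                       [apply C in Hx|apply PC in Hx]; unfold mid in *; destruct Hx; split; lra. }
                 split; [eapply good_weaken; eauto|].
                 intros fuel t h' Hrun. rewrite <- app_assoc in Hrun.
                 destruct (HS' fuel t h' Hrun) as [H|H]; [left; auto|right].
                 rewrite length_app in H; simpl in H; lia.
      * apply Hcont. intros Z G. rewrite (Hmatch Z G). reflexivity.
Qed.

Theorem theorem1 (v0 vinf : R) (k n : nat) (alg : algorithm) :
  v0 < vinf -> (1 <= k)%nat -> (1 < n)%nat ->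
  always_finds_min v0 vinf k alg ->
  exists (D : database) (rank : ranking),
    in_domain v0 vinf D /\ length D = n /\ valid_ranking k D rank /\
    forall fuel t h, run alg k D rank fuel [] = Some (t, h) ->
      INR n / INR k <= INR (length h).
Proof.
  intros Hv Hk Hn Halg.
  destruct (adv v0 vinf k n alg Hk Hv Halg n [] [] vinf n) as [S [G HS]].
  - constructor.
  - intros ? [].
  - exact Hv.
  - lra.
  - reflexivity.
  - simpl; lia.
  - intros Z _. constructor.
  - exists (S ++ []), (topk k (S ++ [])).
    assert (HD: in_domain v0 vinf (S ++ [])).
    { apply (in_dom_app v0 vinf vinf n S []); [exact G|constructor|intros ? []|lra|exact Hv]. }
    split; [exact HD|]. split.
    { destruct G as [_ [GL _]]. rewrite app_nil_r; exact GL. }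
    split; [apply valid_topk, HD|].
    intros fuel t h Hrun. destruct (HS fuel t h Hrun) as [H|H];
    assert (H2 : (n <= k * length h)%nat) by (simpl in H; nia); clear H.
    all: apply le_INR in H2; rewrite mult_INR in H2.
    all: assert (0 < INR k) by (apply lt_0_INR; lia).
    all: unfold Rdiv; apply (Rmult_le_reg_r (INR k)); auto;
         rewrite Rmult_assoc, Rinv_l by lra; lra.
Qed.
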